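(* Let $p$ be an odd prime. Then \[ Z^{+}(p)\equiv B_{2(p-1)}-B_{p-1}-\tfrac{1}{2}H_{\frac{p-1}{2}}\pmod{p} \] and \[ Z^{+}(p)\equiv\tfrac{1}{2}\left(M_{0}(p)+M_{\frac{p-1}{2}}(p)\right)\pmod{p}, \] where $M_{k}(p)=\frac{1+(-1)^{k}k!(p-k-1)!}{p}$ and $Z^{+}(p)=\sum_{k=0}^{p-1}(-1)^kM_k(p)$.
   Context: $B_m$ are the Bernoulli numbers defined by $\frac{x}{e^{x}-1}=\sum_{m\ge0}B_m\frac{x^m}{m!}$. $H_k=\sum_{j=1}^k\frac1j$. For rationals $a,b$, $a\equiv b\pmod p$ means $a-b=pc$ for a rational $c$ whose denominator is coprime to $p$. *)

(* Defs.v *)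
From mathcomp Require Import all_boot all_order all_algebra.
Set Implicit Arguments. Unset Strict Implicit. Unset Printing Implicit Defensive.
Import Order.TTheory GRing.Theory Num.Theory.
Local Open Scope ring_scope.

(* Bernoulli numbers B_m defined by x/(e^x-1) = sum B_m x^m/m!.
   Comparing coefficients of x^(m+1) in x = (e^x - 1) * sum B_j x^j/j!
   gives B_0 = 1 and, for m >= 1, sum_{j=0}^{m} C(m+1,j) B_j = 0, i.e.
   B_m = - 1/(m+1) * sum_{j<m} C(m+1,j) B_j.  (B_1 = -1/2.) *)
Fixpoint bern_list (n : nat) : seq rat :=
  match n with
  | 0%N => [:: 1]
  | n'.+1 =>
      let s := bern_list n' in
      rcons s (- (n'.+2%:R)^-1 *
                 \sum_(j < n'.+1) ('C(n'.+2, j))%:R * nth 0 s j)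
  end.

Definition bernoulli (m : nat) : rat := nth 0 (bern_list m) m.

Definition harmonic (k : nat) : rat := \sum_(1 <= j < k.+1) (j%:R)^-1.

Definition rat_congr (p : nat) (a b : rat) : Prop :=
  exists c : rat, a - b = p%:R * c /\ coprime p `|denq c|%N.

Definition Mk (p k : nat) : rat :=
  (1 + (-1) ^+ k * (k`!)%:R * ((p - k - 1)`!)%:R) / p%:R.

Definition Zplus (p : nat) : rat := \sum_(k < p) (-1) ^+ k * Mk p k.

(* Main.v *)
Require Import Defs.
From mathcomp Require Import all_boot all_order all_algebra.
From mathcomp Require Import ring lra zify.
Import Order.TTheory GRing.Theory Num.Theory.
Local Open Scope ring_scope.
Set Implicit Arguments. Unset Strict Implicit.

Notation B := bernoulli.

Lemma size_bern_list n : size (bern_list n) = n.+1.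
Proof. by elim: n => [|n IH] //=; rewrite size_rcons IH. Qed.

Lemma nth_bern_list n j : (j <= n)%N -> nth 0 (bern_list n) j = B j.
Proof.
elim: n => [|n IH]; first by rewrite leqn0 => /eqP ->.
rewrite leq_eqVlt => /orP [/eqP -> //| hj].
by rewrite /= nth_rcons size_bern_list hj IH.
Qed.

Lemma bern_rec m : B m.+1 = - (m.+2%:R)^-1 * \sum_(j < m.+1) ('C(m.+2, j))%:R * B j.
Proof.
rewrite /B /= nth_rcons size_bern_list ltnn eqxx.
congr (_ * _); apply: eq_bigr => j _; rewrite nth_bern_list //.
by rewrite -ltnS.
Qed.

Lemma bern_sum m : \sum_(j < m.+2) ('C(m.+2, j))%:R * B j = 0.
Proof.
rewrite big_ord_recr /= bern_rec.
have h : (m.+2%:R : rat) != 0 by rewrite pnatr_eq0.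
rewrite [X in X%:R * _]binSn.
set s := \sum_(_ < _) _.
by rewrite mulNr mulrN mulrA mulfV // mul1r addrN.
Qed.

Lemma bern_G n : \sum_(j < n.+1) ('C(n, j))%:R * B j = B n + (n == 1%N)%:R.
Proof.
case: n => [|[|n]].
- by rewrite big_ord_recr big_ord0 /= add0r addr0.
- rewrite !big_ord_recr big_ord0 /= add0r /B /=. rewrite !big_ord_recr big_ord0 /=.
  rewrite add0r. by rewrite addrC.
- by rewrite big_ord_recr /= bern_sum add0r binn mul1r addr0.
Qed.

Lemma sum_widen (F : nat -> rat) n m : (n <= m)%N -> (forall i, (n < i)%N -> F i = 0) ->
  \sum_(i < n.+1) F i = \sum_(i < m.+1) F i.
Proof.
move=> hnm hF; rewrite -!(big_mkord xpredT F).
rewrite [RHS](big_cat_nat _ (n:=n.+1)) //=.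
rewrite [X in _ = _ + X]big1_seq ?addr0 // => i /andP [_]; rewrite mem_iota => /andP [h1 _].
by apply: hF.
Qed.

Lemma bin_swap m i j : (i <= m)%N -> (j <= m)%N ->
  ('C(m, j) * 'C(m - j, i) = 'C(m, i) * 'C(m - i, j))%N.
Proof.
move=> hi hj; case: (leqP (i + j) m) => hij; last first.
  rewrite (@bin_small (m - j) i) ?(@bin_small (m - i) j) ?muln0 //; lia.
have f1 := bin_fact (m := j) hj.
have f2 : ('C(m - j, i) * (i`! * (m - j - i)`!) = (m - j)`!)%N by apply: bin_fact; lia.
have f3 := bin_fact (m := i) hi.
have f4 : ('C(m - i, j) * (j`! * (m - i - j)`!) = (m - i)`!)%N by apply: bin_fact; lia.
have e : (m - j - i = m - i - j)%N by lia.
apply/eqP; rewrite -(@eqn_pmul2r (i`! * j`! * (m - i - j)`!)); last by rewrite !muln_gt0 !fact_gt0.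
apply/eqP.
transitivity ('C(m, j) * (j`! * ('C(m - j, i) * (i`! * (m - j - i)`!))))%N.
  by rewrite e; ring.
rewrite f2 f1 -f3 -f4; ring.
Qed.

Definition Bp m (x : rat) := \sum_(j < m.+1) ('C(m, j))%:R * B j * x ^+ (m - j).

Lemma Bp_shift m x : Bp m (x + 1) = Bp m x + m%:R * x ^+ m.-1.
Proof.
rewrite /Bp.
have step1 : forall j : 'I_m.+1, ('C(m,j))%:R * B j * (x+1)^+(m-j) =
   \sum_(i < m.+1) ('C(m,j))%:R * B j * (('C(m-j,i))%:R * x^+i).
  move=> j; rewrite exprD1n mulr_sumr.
  rewrite (@sum_widen (fun i => 'C(m,j)%:R * B j * (x ^+ i *+ 'C(m - j, i))) (m - j) m).
    by apply: eq_bigr => i _; rewrite -(mulr_natl (x ^+ i)).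
  - lia.
  - by move=> i hi; rewrite (@bin_small (m - j) i) // mulr0n mulr0.
rewrite (eq_bigr _ (fun j _ => step1 j)) exchange_big /=.
have step2 : forall i : 'I_m.+1, \sum_(j < m.+1) ('C(m,j))%:R * B j * (('C(m-j,i))%:R * x^+i)
   = ('C(m, i))%:R * x ^+ i * (B (m - i) + ((m - i)%N == 1%N)%:R).
  move=> i; rewrite -(bern_G (m - i)) mulr_sumr.
  rewrite (@sum_widen (fun j => 'C(m, i)%:R * x ^+ i * ('C(m - i, j)%:R * B j)) (m - i) m).
  - apply: eq_bigr => j _.
    have e := bin_swap (ltnSE (ltn_ord i)) (ltnSE (ltn_ord j)).
    have e' : ('C(m, j))%:R * ('C(m - j, i))%:R = ('C(m, i))%:R * ('C(m - i, j))%:R :> rat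
      by rewrite -!natrM e.
    transitivity (('C(m, j))%:R * ('C(m - j, i))%:R * (B j * x^+i)); first by ring.
    rewrite e'; ring.
  - lia.
  - by move=> j hj; rewrite (@bin_small (m - i) j) // mul0r mulr0.
rewrite (eq_bigr _ (fun i _ => step2 i)).
rewrite (eq_bigr (fun i : 'I_m.+1 => 'C(m, i)%:R * B (m - i) * x ^+ i + 'C(m, i)%:R * x ^+ i * ((m - i)%N == 1%N)%:R)); last first.
  by move=> i _; ring.
rewrite big_split /=; congr (_ + _).
  rewrite [RHS](reindex_inj rev_ord_inj) /=.
  apply: eq_bigr => i _; rewrite subSS subKn ?bin_sub //; exact: ltnSE (ltn_ord i).
clear step1 step2; case: m => [|m]; first by rewrite big_ord_recr big_ord0 /= mul0r add0r mulr0.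
rewrite !big_ord_recr /= subnn subSnn /= mulr0 addr0 mulr1 binSn big1 ?add0r //.
move=> i _; have -> : ((m.+1 - i)%N == 1%N) = false by apply/eqP; have := ltn_ord i; lia.
by rewrite mulr0.
Qed.

Definition S m n := \sum_(a < n) (a%:R : rat) ^+ m.

Lemma Bp0 m : Bp m.+1 0 = B m.+1.
Proof.
rewrite /Bp big_ord_recr /= subnn expr0 binn mul1r mulr1 big1 ?add0r //.
move=> i _; rewrite expr0n; have -> : (m.+1 - i == 0)%N = false by apply/eqP; have := ltn_ord i; lia.
by rewrite mulr0.
Qed.

Lemma Faul m n : m.+1%:R * S m n = Bp m.+1 n%:R - B m.+1.
Proof.
elim: n => [|n IH]; first by rewrite /S big_ord0 mulr0 Bp0 subrr.
rewrite /S big_ord_recr /= mulrDr -/(S m n) IH (mulrSr 1 n) Bp_shift /=; ring.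
Qed.

Lemma Faul2 m n : S m n =
  \sum_(j < m.+1) ('C(m, j))%:R * B j * (n%:R) ^+ (m.+1 - j) / (m.+1 - j)%:R.
Proof.
have h : (m.+1%:R : rat) != 0 by rewrite pnatr_eq0.
have -> : S m n = (m.+1%:R)^-1 * (m.+1%:R * S m n) by rewrite mulrA mulVf // mul1r.
rewrite Faul /Bp big_ord_recr /= subnn expr0 binn mul1r mulr1 addrK mulr_sumr.
apply: eq_bigr => j _.
have hj : ((m.+1 - j)%:R : rat) != 0 by rewrite pnatr_eq0; have := ltn_ord j; lia.
have e : (m.+1 * 'C(m, j) = (m.+1 - j) * 'C(m.+1, j))%N by rewrite -mul_bin_down.
have e' : (m.+1%:R : rat) * ('C(m, j))%:R = (m.+1 - j)%:R * ('C(m.+1, j))%:R by rewrite -!natrM e.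
move: e' h hj; set M := (m.+1%:R : rat); set K := ((m.+1 - j)%:R : rat).
set C1 := ('C(m, j))%:R; set C2 := ('C(m.+1, j))%:R => e' h hj.
have -> : C1 = K * C2 / M by rewrite -e' mulrAC mulfV // mul1r.
field; by rewrite hj /= addrC natr1 pnatr_eq0.
Qed.

Lemma bern_ineq p l : (1 <= p)%N -> (1 + (p - 1) * l <= p ^ l)%N.
Proof.
move=> hp; elim: l => [|l IH]; first by rewrite muln0 expn0.
rewrite expnS. have : (1 <= p ^ l)%N by rewrite expn_gt0; lia. nia.
Qed.


Section PInt.
Variable p : nat.
Hypothesis hp : prime p.
Hypothesis hodd : odd p.

Definition pint (x : rat) : Prop :=
  exists (n : int) (d : nat), coprime p d /\ x = n%:~R / d%:R.

Lemma pP : (p%:R : rat) != 0.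
Proof. by rewrite pnatr_eq0 -lt0n prime_gt0. Qed.

Lemma pint_int (n : int) : pint n%:~R.
Proof. exists n, 1%N; split; first by rewrite coprimen1. by rewrite divr1. Qed.

Lemma pint_nat (n : nat) : pint n%:R.
Proof. have := pint_int n; by rewrite -pmulrn. Qed.

Lemma pint0 : pint 0. Proof. exact: (pint_nat 0). Qed.
Lemma pint1 : pint 1. Proof. exact: (pint_nat 1). Qed.

Lemma pint_invn (d : nat) : coprime p d -> pint (d%:R^-1).
Proof. move=> cd; exists 1, d; split => //; by rewrite mul1r. Qed.

Lemma pintM x y : pint x -> pint y -> pint (x * y).
Proof.
move=> [n1 [d1 [c1 ->]]] [n2 [d2 [c2 ->]]].
exists (n1 * n2), (d1 * d2)%N; split; first by rewrite coprimeMr c1 c2.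
by rewrite intrM natrM invfM; ring.
Qed.

Lemma pintN x : pint x -> pint (- x).
Proof.
move=> [n1 [d1 [c1 ->]]]; exists (- n1), d1; split => //.
by rewrite mulrNz mulNr.
Qed.

Lemma pintD x y : pint x -> pint y -> pint (x + y).
Proof.
move=> [n1 [d1 [c1 ->]]] [n2 [d2 [c2 ->]]].
have d1P : d1 != 0%N by apply/negP => /eqP E; move: c1; rewrite E /coprime gcdn0 => /eqP E1; move: hp; rewrite E1.
have d2P : d2 != 0%N by apply/negP => /eqP E; move: c2; rewrite E /coprime gcdn0 => /eqP E1; move: hp; rewrite E1.
exists (n1 * d2%:Z + n2 * d1%:Z), (d1 * d2)%N; split; first by rewrite coprimeMr c1 c2.
have h1 : (d1%:R : rat) != 0 by rewrite pnatr_eq0.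
have h2 : (d2%:R : rat) != 0 by rewrite pnatr_eq0.
rewrite intrD !intrM natrM /=. rewrite -!pmulrn. field. by rewrite h1 h2.
Qed.

Lemma pintB x y : pint x -> pint y -> pint (x - y).
Proof. by move=> hx hy; apply: pintD => //; apply: pintN. Qed.

Lemma pintX x n : pint x -> pint (x ^+ n).
Proof. move=> hx; elim: n => [|n IH]; first by rewrite expr0; exact pint1.
by rewrite exprS; apply: pintM. Qed.

Lemma pint_sum (I : Type) (r : seq I) (P : pred I) (F : I -> rat) :
  (forall i, P i -> pint (F i)) -> pint (\sum_(i <- r | P i) F i).
Proof. move=> h; elim/big_rec: _ => [|i x Pi hx]; first exact pint0. by apply: pintD => //; apply: h. Qed.

Lemma pint_prod (I : Type) (r : seq I) (P : pred I) (F : I -> rat) :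
  (forall i, P i -> pint (F i)) -> pint (\prod_(i <- r | P i) F i).
Proof. move=> h; elim/big_rec: _ => [|i x Pi hx]; first exact pint1. by apply: pintM => //; apply: h. Qed.

Lemma pint_congr a b : pint ((a - b) / p%:R) -> rat_congr p a b.
Proof.
move=> [n [d [cd E]]]; exists ((a - b) / p%:R); split; first by rewrite mulrC divfK // pP.
set x := (a - b) / p%:R in E *.
have dP : d != 0%N by apply/negP => /eqP E0; move: cd; rewrite E0 /coprime gcdn0 => /eqP E1; move: hp; rewrite E1.
suff : (`|denq x| %| d)%N by move=> hd; apply: coprime_dvdr hd cd.
have e1 : numq x * d%:Z = n * denq x.
  apply/eqP; rewrite -(eqr_int rat) !intrM numqE E pmulrn. apply/eqP.
  have h1 : (d%:R : rat) != 0 by rewrite pnatr_eq0.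
  field. done.
have e2 : (`|numq x| * d = `|n| * `|denq x|)%N by rewrite -[d]/(`|d%:Z|%N) -!abszM e1.
have : (`|denq x| %| `|numq x| * d)%N by rewrite e2 dvdn_mull.
by rewrite Gauss_dvdr // coprime_sym coprime_num_den.
Qed.


Notation P := (p%:R : rat).
Definition dv (e : nat) (x : rat) := pint (x / P ^+ e).

Lemma Pe_neq0 e : P ^+ e != 0. Proof. by rewrite expf_neq0 // pP. Qed.

Lemma dvD e x y : dv e x -> dv e y -> dv e (x + y).
Proof. by rewrite /dv mulrDl; apply: pintD. Qed.
Lemma dvN e x : dv e x -> dv e (- x).
Proof. by rewrite /dv mulNr; apply: pintN. Qed.
Lemma dvB e x y : dv e x -> dv e y -> dv e (x - y).
Proof. by move=> hx hy; apply: dvD => //; apply: dvN. Qed.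
Lemma dvMl e c x : pint c -> dv e x -> dv e (c * x).
Proof. by rewrite /dv -mulrA; apply: pintM. Qed.
Lemma dvMr e c x : pint c -> dv e x -> dv e (x * c).
Proof. by rewrite mulrC; apply: dvMl. Qed.
Lemma dv0 x : dv 0 x <-> pint x.
Proof. by rewrite /dv expr0 divr1. Qed.
Lemma dvz e : dv e 0. Proof. by rewrite /dv mul0r; apply: pint0. Qed.
Lemma dvPM e x : dv e x -> dv e.+1 (P * x).
Proof. rewrite /dv exprS. have := pP. move=> h.
suff -> : P * x / (P * P ^+ e) = x / P ^+ e by []. by field; rewrite h Pe_neq0. Qed.
Lemma dvPMinv e x : dv e.+1 (P * x) -> dv e x.
Proof. rewrite /dv exprS. have := pP. move=> h.
suff -> : P * x / (P * P ^+ e) = x / P ^+ e by []. by field; rewrite h Pe_neq0. Qed.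
Lemma dvMM e f x y : dv e x -> dv f y -> dv (e + f) (x * y).
Proof. rewrite /dv exprD invfM => hx hy.
by have := pintM hx hy; rewrite mulrACA. Qed.
Lemma dvW e x : dv e.+1 x -> dv e x.
Proof. rewrite /dv exprS => h.
have -> : x / P ^+ e = P * (x / (P * P ^+ e)) by field; rewrite pP Pe_neq0.
by apply: pintM => //; exact: pint_nat. Qed.
Lemma dvWle e f x : (e <= f)%N -> dv f x -> dv e x.
Proof. move=> /subnK <-; elim: (f - e)%N => [|k IH] //= h.
by apply: IH; apply: dvW. Qed.
Lemma dvP e x : pint x -> dv e (P ^+ e * x).
Proof. move=> h; rewrite /dv. suff -> : P ^+ e * x / P ^+ e = x by [].
by field; rewrite Pe_neq0. Qed.
Lemma dv_sum e (I : Type) (r : seq I) (Q : pred I) (F : I -> rat) :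
  (forall i, Q i -> dv e (F i)) -> dv e (\sum_(i <- r | Q i) F i).
Proof. move=> h; elim/big_rec: _ => [|i x Pi hx]; first exact: dvz. by apply: dvD => //; apply: h. Qed.
Lemma dv_pint e x : dv e x -> pint x.
Proof. move=> h; apply/dv0; exact: dvWle h. Qed.



Lemma p_ge3 : (3 <= p)%N.
Proof. have := prime_gt1 hp; case: p hodd => [|[|[|q]]] //=. Qed.

Lemma Vgen k e : (logn p k.+1 + e <= k)%N -> dv e (P ^+ k / k.+1%:R).
Proof.
move=> hle; have [c cc ec] := pfactor_coprime hp (ltn0Sn k).
set l := logn p k.+1 in hle ec.
have hc : (c%:R : rat) != 0.
  rewrite pnatr_eq0; apply/negP => /eqP c0; move: ec; rewrite c0 mul0n //.
have hP := pP.
rewrite /dv ec natrM natrX.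
have -> : P ^+ k = P ^+ (k - l - e) * P ^+ l * P ^+ e.
  by rewrite -!exprD; congr (_ ^+ _); lia.
have -> : P ^+ (k - l - e) * P ^+ l * P ^+ e / (c%:R * P ^+ l) / P ^+ e =
          P ^+ (k - l - e) * (c%:R)^-1.
  by field; rewrite hc !expf_neq0.
apply: pintM; first by apply: pintX; apply: pint_nat.
exact: pint_invn.
Qed.

Lemma plog_bound k : (p ^ logn p k.+1 <= k.+1)%N.
Proof.
have [c cc ec] := pfactor_coprime hp (ltn0Sn k).
rewrite [in X in (_ <= X)%N]ec; apply: leq_pmull.
rewrite lt0n; apply/negP => /eqP c0; move: ec; rewrite c0 mul0n //.
Qed.

Lemma V1 k : (1 <= k)%N -> dv 1 (P ^+ k / k.+1%:R).
Proof.
move=> hk; apply: Vgen.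
have h1 := plog_bound k; have h2 := bern_ineq (logn p k.+1) (prime_gt0 hp).
have := p_ge3; nia.
Qed.

Lemma V2 k : (5 <= p)%N -> (2 <= k)%N -> dv 2 (P ^+ k / k.+1%:R).
Proof.
move=> h5 hk; apply: Vgen.
have h1 := plog_bound k; have h2 := bern_ineq (logn p k.+1) (prime_gt0 hp).
nia.
Qed.


Lemma term_eq m (i : nat) : (i <= m)%N ->
  ('C(m, i))%:R * B i * P ^+ (m.+1 - i) / (m.+1 - i)%:R =
  ('C(m, i))%:R * (P * B i) * (P ^+ (m - i) / (m - i).+1%:R).
Proof.
move=> hi; rewrite subSn // exprS.
move: (m - i)%N => k. ring.
Qed.

Lemma S_split m : S m p = P * B m +
   \sum_(i < m) ('C(m, i))%:R * (P * B i) * (P ^+ (m - i) / (m - i).+1%:R).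
Proof.
rewrite Faul2 big_ord_recr /= addrC subSnn binn expr1 divr1 mul1r.
rewrite [B m * _]mulrC; congr (_ + _); apply: eq_bigr => i _; apply: term_eq.
exact: ltnW (ltn_ord i).
Qed.

Lemma pint_S m : pint (S m p).
Proof. apply: pint_sum => i _; apply: pintX; exact: pint_nat. Qed.

Lemma pintPB j : pint (P * B j).
Proof.
elim: j {-2}j (leqnn j) => [|j IH] i hi.
  move: hi; rewrite leqn0 => /eqP ->; rewrite /B /= mulr1; exact: pint_nat.
have -> : P * B i = S i p - \sum_(k < i) ('C(i, k))%:R * (P * B k) * (P ^+ (i - k) / (i - k).+1%:R).
  by rewrite S_split addrK.
apply: pintB; first exact: pint_S.
apply: pint_sum => k _; apply: pintM; first apply: pintM.
- exact: pint_nat.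
- apply: IH; have := ltn_ord k; lia.
- apply: (dv_pint (e := 1)); apply: V1; have := ltn_ord k; lia.
Qed.

Lemma SB1 m : dv 1 (S m p - P * B m).
Proof.
rewrite S_split [P * B _ + _]addrC addrK; apply: dv_sum => i _.
apply: dvMl; first by apply: pintM; [exact: pint_nat| exact: pintPB].
apply: V1; have := ltn_ord i; lia.
Qed.

Lemma SB2 m : (5 <= p)%N ->
  dv 2 (S m.+1 p - P * B m.+1 - m.+1%:R / 2%:R * P * (P * B m)).
Proof.
move=> h5; rewrite S_split [P * B _ + _]addrC addrK big_ord_recr /= subSnn binSn.
have -> : ((m.+1)%:R * (P * B m) * (P ^+ 1 / 2%:R)) = m.+1%:R / 2%:R * P * (P * B m).
  by rewrite expr1; ring.
rewrite addrK; apply: dv_sum => i _.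
apply: dvMl; first by apply: pintM; [exact: pint_nat| exact: pintPB].
have := ltn_ord i => hi.
have -> : (m.+1 - i = (m - i).+1)%N by lia.
apply: V2 => //; lia.
Qed.


Lemma coprime_small j : (0 < j < p)%N -> coprime p j.
Proof. move=> /andP [h1 h2]; by rewrite prime_coprime // gtnNdvd. Qed.

Lemma harmS k : harmonic k.+1 = harmonic k + (k.+1%:R)^-1.
Proof. by rewrite /harmonic big_nat_recr. Qed.

Lemma harm0 : harmonic 0 = 0.
Proof. by rewrite /harmonic big_geq. Qed.

Lemma pint_harm k : (k < p)%N -> pint (harmonic k).
Proof.
elim: k => [|k IH] hk; first by rewrite harm0; exact: pint0.
rewrite harmS; apply: pintD; first by apply: IH; apply: ltnW.
by apply: pint_invn; apply: coprime_small.
Qed.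

Lemma PL_step (A c H K : rat) : pint H -> pint c -> pint K -> K != 0 -> dv 2 (A - c * (1 - P * H)) ->
  dv 2 (A * (P - K) - (- (K * c)) * (1 - P * (H + K^-1))).
Proof.
move=> hH hc hK' hK hE.
have -> : A * (P - K) - (- (K * c)) * (1 - P * (H + K^-1)) =
   (A - c * (1 - P * H)) * (P - K) + P ^+ 2 * (- (c * H)) by field.
apply: dvD; first apply: dvMr => //.
  by apply: pintB => //; apply: pint_nat.
by apply: dvP; apply: pintN; apply: pintM.
Qed.

Lemma PL k : (k <= p.-1)%N ->
  dv 2 (\prod_(i < k) (P - (i.+1)%:R) - ((-1) ^+ k * (k`!)%:R) * (1 - P * harmonic k)).
Proof.
elim: k => [|k IH] hk.
  rewrite big_ord0 harm0 expr0 mul1r mulr0 subr0 mulr1 subrr; exact: dvz.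
rewrite big_ord_recr /= harmS.
have -> : (-1) ^+ k.+1 * (k.+1`!)%:R = - (k.+1%:R * ((-1) ^+ k * (k`!)%:R)) :> rat.
  by rewrite exprS factS natrM; ring.
apply: PL_step.
- apply: pint_harm; have := prime_gt0 hp; lia.
- by apply: pintM; [apply: pintX; apply: pintN; apply: pint1 | apply: pint_nat].
- exact: pint_nat.
- by rewrite pnatr_eq0.
- by apply: IH; apply: ltnW.
Qed.

Definition Wq := (((p.-1)`!).+1%:R) / P.

Lemma pint_W : pint Wq.
Proof.
have := prime_gt1 hp => h1; have := hp; rewrite (Wilson h1) => /dvdnP [c ec].
rewrite /Wq ec natrM mulfK ?pP //; exact: pint_nat.
Qed.

Lemma PW1 : P * Wq - 1 = ((p.-1)`!)%:R.
Proof. by rewrite /Wq mulrC mulfVK ?pP // mulrSr addrK. Qed.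

Lemma Mk_alg (A f1 f2 H W c : rat) : pint H -> pint W -> pint f1 -> pint f2 -> pint c ->
  dv 2 (A - c * f1 * (1 - P * H)) -> P * W - 1 = A * f2 ->
  dv 1 ((1 + c * f1 * f2) / P - (W - H)).
Proof.
move=> hH hW h1 h2 hc hE eW.
have hPn := pP.
set X := 1 + c * f1 * f2.
have eX : X = P * (W + c * f1 * f2 * H) - (A - c * f1 * (1 - P * H)) * f2.
  apply/eqP; rewrite -subr_eq0; apply/eqP.
  have -> : X - (P * (W + c * f1 * f2 * H) - (A - c * f1 * (1 - P * H)) * f2) =
    A * f2 - (P * W - 1) by rewrite /X; ring.
  by rewrite eW subrr.
have hX : dv 1 X.
  rewrite eX; apply: dvB.
    apply: dvPM; apply/dv0; apply: pintD => //; do 3! apply: pintM => //.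
  by apply: dvMr => //; apply: dvW.
apply: dvPMinv.
have -> : P * (X / P - (W - H)) = (X - P * W + P * H) by field.
have -> : X - P * W + P * H = - ((A - c * f1 * (1 - P * H)) * f2) + P * (H * X).
  rewrite /X; apply/eqP; rewrite -subr_eq0; apply/eqP.
  transitivity (A * f2 - (P * W - 1)); first by ring.
  by rewrite eW subrr.
apply: dvD; first by apply: dvN; apply: dvMr.
by apply: dvPM; apply: dvMl.
Qed.

Lemma Mk_cong k : (k < p)%N -> dv 1 (Mk p k - (Wq - harmonic k)).
Proof.
move=> hk.
have hk' : (k <= p.-1)%N by have := prime_gt0 hp; lia.
rewrite /Mk (_ : (p - k - 1 = p.-1 - k)%N); last by lia.
apply: (@Mk_alg (\prod_(i < k) (P - (i.+1)%:R))).
- exact: pint_harm.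
- exact: pint_W.
- exact: pint_nat.
- exact: pint_nat.
- by apply: pintX; apply: pintN; apply: pint1.
- exact: PL.
- rewrite PW1 -(ffact_fact hk') natrM ffact_prod natr_prod; congr (_ * _).
  apply: eq_bigr => i _.
  have hi := ltn_ord i.
  rewrite (_ : (p.-1 - i = p - i.+1)%N); last by lia.
  rewrite natrB //; lia.
Qed.


Lemma sign_double n : (-1 : rat) ^+ n.*2 = 1.
Proof. by rewrite -mul2n exprM expr2 mulN1r opprK expr1n. Qed.

Lemma alt_one n : \sum_(k < (n.*2).+1) (-1 : rat) ^+ k = 1.
Proof.
elim: n => [|n IH]; first by rewrite big_ord_recr big_ord0 /= add0r expr0.
rewrite doubleS 2!big_ord_recr /= IH !exprS sign_double; ring.
Qed.

Lemma alt_harm n : \sum_(k < (n.*2).+1) (-1 : rat) ^+ k * harmonic k = 2%:R^-1 * harmonic n.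
Proof.
elim: n => [|n IH]; first by rewrite big_ord_recr big_ord0 /= add0r expr0 !harm0 mulr0.
rewrite doubleS 2!big_ord_recr /= IH !exprS sign_double !harmS.
have -> : ((n.*2).+2%:R : rat) = 2%:R * (n.+1)%:R by rewrite -natrM; congr (_%:R); lia.
rewrite invfM. ring.
Qed.

Lemma p_half : p = (p./2).*2.+1.
Proof. by rewrite -[p in LHS]odd_double_half hodd add1n. Qed.

Lemma pint_inv2 : pint (2%:R^-1).
Proof. apply: pint_invn; apply: coprime_small; have := p_ge3; lia. Qed.

Lemma pint_sign k : pint ((-1) ^+ k).
Proof. by apply: pintX; apply: pintN; apply: pint1. Qed.

Lemma Zplus_cong : dv 1 (Zplus p - (Wq - 2%:R^-1 * harmonic p./2)).
Proof.
have e2 : \sum_(k < p) (-1) ^+ k * (Wq - harmonic k) = Wq - 2%:R^-1 * harmonic p./2.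
  rewrite (eq_bigr (fun k : 'I_p => (-1) ^+ k * Wq - (-1) ^+ k * harmonic k)); last by move=> k _; ring.
  rewrite sumrB -mulr_suml.
  have -> : \sum_(k < p) (-1 : rat) ^+ k = 1 by rewrite p_half alt_one.
  have -> : \sum_(k < p) (-1 : rat) ^+ k * harmonic k = 2%:R^-1 * harmonic p./2.
    by rewrite [in LHS]p_half alt_harm.
  by rewrite mul1r.
rewrite -e2 /Zplus -sumrB; apply: dv_sum => k _.
rewrite -mulrBr; apply: dvMl; first exact: pint_sign.
exact: Mk_cong.
Qed.

Lemma Sshift m n : S m n.+1 = 0 ^+ m + \sum_(i < n) ((i.+1)%:R) ^+ m.
Proof. by rewrite /S big_ord_recl. Qed.

Lemma ep : p = p.-1.+1.
Proof. by rewrite prednK // prime_gt0. Qed.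

Lemma S_pos m : (0 < m)%N -> S m p = \sum_(i < p.-1) ((i.+1)%:R) ^+ m.
Proof.
move=> hm; rewrite {1}ep Sshift expr0n.
have -> : (m == 0%N) = false by case: m hm.
by rewrite add0r.
Qed.

Lemma S_odd m : odd m -> dv 1 (S m p).
Proof.
move=> hm.
have m0 : (0 < m)%N by case: m hm.
have e2 : \sum_(i < p.-1) ((i.+1)%:R : rat) ^+ m = \sum_(i < p.-1) (P - (i.+1)%:R) ^+ m.
  rewrite (reindex_inj rev_ord_inj) /=; apply: eq_bigr => i _; congr (_ ^+ _).
  have hi := ltn_ord i.
  rewrite (_ : ((p.-1 - i.+1).+1 = p - i.+1)%N); last by lia.
  rewrite natrB //; lia.
have sgm : (-1 : rat) ^+ m = -1.
  by rewrite -[m]odd_double_half hm exprD sign_double expr1 mulr1.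
have key : forall a : rat, pint a -> dv 1 (a ^+ m + (P - a) ^+ m).
  move=> a ha.
  have e : (P - a) ^+ m - (- a) ^+ m =
     P * \sum_(j < m) (P - a) ^+ (m.-1 - j) * (- a) ^+ j.
    by rewrite subrXX opprK subrK.
  have -> : a ^+ m + (P - a) ^+ m = (P - a) ^+ m - (- a) ^+ m.
    by rewrite exprNn sgm mulN1r opprK addrC.
  rewrite e; apply: dvPM; apply/dv0; apply: pint_sum => j _.
  apply: pintM; apply: pintX => //; [apply: pintB => //; exact: pint_nat | exact: pintN].
have hS : dv 1 (S m p + S m p).
  rewrite {1}S_pos // S_pos // {2}e2 -big_split /=.
  apply: dv_sum => i _; apply: key; exact: pint_nat.
have -> : S m p = 2%:R^-1 * (S m p + S m p).
  by field.
apply: dvMl => //; exact: pint_inv2.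
Qed.


Definition q (a : nat) : rat := (((a%:R) ^+ p.-1) - 1) / P.

Lemma pint_q a : (0 < a < p)%N -> pint (q a).
Proof.
move=> ha.
have ca := coprime_small ha.
have a0 : (0 < a)%N by case/andP: ha.
have h1 : (a <= a ^ p)%N by rewrite -{1}(expn1 a) leq_pexp2l // prime_gt0.
have : (p %| a ^ p - a)%N by rewrite -eqn_mod_dvd //; apply/eqP; exact: fermat_little.
have -> : (a ^ p - a = a * (a ^ p.-1 - 1))%N by rewrite mulnBr muln1 -expnS -ep.
rewrite Gauss_dvdr // => /dvdnP [c ec].
have h2 : (1 <= a ^ p.-1)%N by rewrite expn_gt0 a0.
have -> : q a = c%:R.
  rewrite /q -natrX -(natrB _ h2) ec natrM mulfK //; exact: pP.
exact: pint_nat.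
Qed.

Lemma prod_cong n (x : nat -> rat) : (forall i, (i < n)%N -> pint (x i)) ->
  dv 2 (\prod_(i < n) (1 + P * x i) - (1 + P * \sum_(i < n) x i)).
Proof.
elim: n => [|n IH] hx.
  by rewrite big_ord0 big_ord0 mulr0 addr0 subrr; exact: dvz.
rewrite !big_ord_recr /=.
set Pi := \prod_(i < n) _; set Si := \sum_(i < n) _.
have hxn : pint (x n) by apply: hx.
have -> : Pi * (1 + P * x n) - (1 + P * (Si + x n)) =
   (Pi - (1 + P * Si)) * (1 + P * x n) + P ^+ 2 * (Si * x n) by ring.
apply: dvD; first apply: dvMr.
- by apply: pintD; [exact: pint1 | apply: pintM => //; exact: pint_nat].
- by apply: IH => i hi; apply: hx; apply: ltnW.
apply: dvP; apply: pintM => //; apply: pint_sum => i _; apply: hx.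
exact: ltnW (ltn_ord i).
Qed.

Lemma prod_fact n : \prod_(i < n) ((i.+1)%:R : rat) = (n`!)%:R.
Proof.
elim: n => [|n IH]; first by rewrite big_ord0.
by rewrite big_ord_recr /= IH factS natrM mulrC.
Qed.

Lemma Lerch : dv 1 (\sum_(i < p.-1) q i.+1 - Wq).
Proof.
set h := p./2.
have hph : p.-1 = h.*2 by rewrite {1}p_half.
have eP : P = 2%:R * h%:R + 1 by rewrite {1}p_half -addn1 natrD -muln2 natrM mulrC.
have h1 : \prod_(i < p.-1) (1 + P * q i.+1) = ((p.-1)`!%:R) ^+ p.-1.
  rewrite -prod_fact -prodrXl; apply: eq_bigr => i _.
  by rewrite /q; field; exact: pP.
set y := P * Wq ^+ 2 - 2%:R * Wq.
have h2 : ((p.-1)`!%:R : rat) ^+ p.-1 = \prod_(i < h) (1 + P * y).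
  rewrite -PW1 prodr_const card_ord {1}hph -mul2n exprM.
  by congr (_ ^+ _); rewrite /y; ring.
have hy : pint y.
  rewrite /y; apply: pintB; first by apply: pintM; [exact: pint_nat | apply: pintX; exact: pint_W].
  by apply: pintM; [exact: pint_nat | exact: pint_W].
have hc := @prod_cong h (fun _ => y) (fun _ _ => hy).
rewrite sumr_const card_ord -[y *+ h]mulr_natl in hc.
have hL : dv 2 (\prod_(i < p.-1) (1 + P * q i.+1) - (1 + P * \sum_(i < p.-1) q i.+1)).
  apply: (@prod_cong p.-1 (fun i => q i.+1)) => i hi; apply: pint_q.
  have := prime_gt0 hp; lia.
apply: dvPMinv.
have -> : P * (\sum_(i < p.-1) q i.+1 - Wq) =
   - (\prod_(i < p.-1) (1 + P * q i.+1) - (1 + P * \sum_(i < p.-1) q i.+1))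
   + (\prod_(i < h) (1 + P * y) - (1 + P * (h%:R * y)))
   + P ^+ 2 * (h%:R * Wq ^+ 2 - Wq).
  have e0 : P - (2%:R * h%:R + 1) = 0 by rewrite {1}eP subrr.
  transitivity (- (\prod_(i < p.-1) (1 + P * q i.+1) - (1 + P * \sum_(i < p.-1) q i.+1))
   + (\prod_(i < h) (1 + P * y) - (1 + P * (h%:R * y)))
   + P ^+ 2 * (h%:R * Wq ^+ 2 - Wq) + P * Wq * (P - (2%:R * h%:R + 1))); last by rewrite e0 mulr0 addr0.
  rewrite h1 h2 /y.
  move: (\prod_(i < h) _) (\sum_(i < p.-1) q i.+1) => X Y. ring.
apply: dvD; first apply: dvD => //; first by apply: dvN.
apply: dvP; apply: pintB; first by apply: pintM; [exact: pint_nat | apply: pintX; exact: pint_W].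
exact: pint_W.
Qed.


Lemma pint_half m : pint (m%:R / 2%:R).
Proof. apply: pintM; [exact: pint_nat | exact: pint_inv2]. Qed.

Lemma hAB m : odd m -> (5 <= p)%N -> dv 2 (S m.+1 p - P * B m.+1).
Proof.
move=> hm h5.
have h := SB2 m h5.
have hPB : dv 1 (P * B m).
  have -> : P * B m = S m p - (S m p - P * B m) by ring.
  by apply: dvB; [exact: S_odd | exact: SB1].
have -> : S m.+1 p - P * B m.+1 =
  (S m.+1 p - P * B m.+1 - m.+1%:R / 2%:R * P * (P * B m)) + (m.+1%:R / 2%:R) * (P * (P * B m))
  by ring.
apply: dvD => //; apply: dvMl; first exact: pint_half.
exact: dvPM.
Qed.

Lemma Pm1 : P - 1 = \sum_(i < p.-1) (1 : rat).
Proof. by rewrite sumr_const card_ord {1}ep mulrSr addrK. Qed.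

Lemma S_sq : dv 2 (S (2 * p.-1) p - 2%:R * S p.-1 p + (P - 1)).
Proof.
have hp1 : (0 < p.-1)%N by have := p_ge3; lia.
rewrite S_pos ?muln_gt0 ?hp1 // S_pos // Pm1 mulr_sumr -sumrB -big_split /=.
apply: dv_sum => i _.
have hq : pint (q i.+1) by apply: pint_q; have := ltn_ord i; have := p_ge3; lia.
have -> : ((i.+1)%:R : rat) ^+ (2 * p.-1) - 2%:R * (i.+1)%:R ^+ p.-1 + 1 =
   P ^+ 2 * (q i.+1) ^+ 2.
  rewrite mulnC exprM /q; have := pP; move: ((i.+1)%:R ^+ p.-1) => z hz.
  by field.
exact: dvP (pintX 2 hq).
Qed.

Lemma ePQ : P * \sum_(i < p.-1) q i.+1 = S p.-1 p - (P - 1).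
Proof.
have hp1 : (0 < p.-1)%N by have := p_ge3; lia.
rewrite S_pos // Pm1 mulr_sumr -sumrB; apply: eq_bigr => i _.
rewrite /q; field; exact: pP.
Qed.

Lemma Glaisher5 : (5 <= p)%N -> dv 1 (Wq - (B (2 * p.-1) - B p.-1)).
Proof.
move=> h5.
have [h' eh] : exists h', p = h'.*2.+3.
  exists (p./2).-1; rewrite {1}p_half; have := p_ge3; rewrite {1}p_half; case: (p./2) => [|[|k]] //=.
have e1 : (p.-1.-1).+1 = p.-1 by rewrite eh.
have e2 : ((2 * p.-1).-1).+1 = (2 * p.-1)%N by rewrite eh.
have o1 : odd p.-1.-1 by rewrite eh /= odd_double.
have o2 : odd (2 * p.-1).-1.
  have e : ((2 * p.-1).-1 = (2 * (2 * h' + 1)).+1)%N by rewrite eh -mul2n; lia.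
  by rewrite e oddS oddM.
have hA := hAB o1 h5; rewrite e1 in hA.
have hB := hAB o2 h5; rewrite e2 in hB.
have -> : Wq - (B (2 * p.-1) - B p.-1) =
   - (\sum_(i < p.-1) q i.+1 - Wq) + (\sum_(i < p.-1) q i.+1 - (B (2 * p.-1) - B p.-1)) by ring.
apply: dvD; first by apply: dvN; exact: Lerch.
apply: dvPMinv.
have -> : P * (\sum_(i < p.-1) q i.+1 - (B (2 * p.-1) - B p.-1)) =
   P * \sum_(i < p.-1) q i.+1 - P * B (2 * p.-1) + P * B p.-1 by ring.
rewrite ePQ.
have -> : S p.-1 p - (P - 1) - P * B (2 * p.-1) + P * B p.-1 =
   - (S (2 * p.-1) p - 2%:R * S p.-1 p + (P - 1)) + (S (2 * p.-1) p - P * B (2 * p.-1))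
   - (S p.-1 p - P * B p.-1) by ring.
apply: dvB => //; apply: dvD => //; apply: dvN; exact: S_sq.
Qed.

End PInt.

Lemma B0v : bernoulli 0 = 1. Proof. by []. Qed.
Lemma B1v : bernoulli 1 = - 1 / 2%:R.
Proof. rewrite bern_rec !big_ord_recr big_ord0 /= B0v. by apply/eqP; vm_compute. Qed.
Lemma B2v : bernoulli 2 = 1 / 6%:R.
Proof. rewrite bern_rec !big_ord_recr big_ord0 /= B0v B1v. by apply/eqP; vm_compute. Qed.
Lemma B3v : bernoulli 3 = 0.
Proof. rewrite bern_rec !big_ord_recr big_ord0 /= B0v B1v B2v. by apply/eqP; vm_compute. Qed.
Lemma B4v : bernoulli 4 = - 1 / 30%:R.
Proof. rewrite bern_rec !big_ord_recr big_ord0 /= B0v B1v B2v B3v. by apply/eqP; vm_compute. Qed.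

Lemma dv1_congr p (hp : prime p) a b : dv p 1 (a - b) -> rat_congr p a b.
Proof. by rewrite /dv expr1; apply: pint_congr. Qed.

Lemma Glaisher3 : dv 3 1 (Wq 3 - (bernoulli (2 * (3).-1) - bernoulli (3).-1)).
Proof.
rewrite /= B4v B2v /dv /Wq /=; exists 2, 5%N; split => //; by apply/eqP; vm_compute.
Qed.

Theorem mainTheorem12 (p : nat) (hp : prime p) (hodd : odd p) :
  rat_congr p (Zplus p)
    (bernoulli (2 * (p - 1)) - bernoulli (p - 1) - 2%:R^-1 * harmonic (p - 1)./2)
  /\
  rat_congr p (Zplus p) (2%:R^-1 * (Mk p 0 + Mk p (p - 1)./2)).
Proof.
rewrite subn1.
have hh : (p.-1)./2 = p./2 by rewrite {1}(p_half hodd) /= doubleK.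
rewrite hh.
have hZ := Zplus_cong hp hodd.
have G : dv p 1 (Wq p - (bernoulli (2 * p.-1) - bernoulli p.-1)).
  case: (ltnP p 5) => h5; last exact: Glaisher5.
  have -> : p = 3%N.
    have := p_ge3 hp hodd; move: hodd h5; case: (p) => [|[|[|[|[|k]]]]] //.
  exact: Glaisher3.
split; apply: dv1_congr => //.
- have -> : Zplus p - (bernoulli (2 * p.-1) - bernoulli p.-1 - 2%:R^-1 * harmonic p./2) =
    (Zplus p - (Wq p - 2%:R^-1 * harmonic p./2)) + (Wq p - (bernoulli (2 * p.-1) - bernoulli p.-1))
    by ring.
  exact: dvD hp _ _ _ hZ G.
- have h0 := Mk_cong hp hodd (prime_gt0 hp).
  have hhp : (p./2 < p)%N by rewrite {2}(p_half hodd); lia.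
  have h1 := Mk_cong hp hodd hhp.
  rewrite harm0 subr0 in h0.
  have -> : Zplus p - 2%:R^-1 * (Mk p 0 + Mk p p./2) =
    (Zplus p - (Wq p - 2%:R^-1 * harmonic p./2)) - 2%:R^-1 * (Mk p 0 - Wq p)
    - 2%:R^-1 * (Mk p p./2 - (Wq p - harmonic p./2)) by field.
  apply: (dvB hp); first apply: (dvB hp) => //.
  + by apply: dvMl => //; exact: pint_inv2.
  + by apply: dvMl => //; exact: pint_inv2.
Qed.
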